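(* Let $\mathbf H\in\mathbb R^{m\times d}$, $\mathbf y\in\mathbb R^m$, $\mathbf w_1,\ldots,\mathbf w_p\in\mathbb R^d$, and let $\psi_i\colon\mathbb R\to\mathbb R$, $i=1,\ldots,p$, be convex functions. If $\operatorname{argmin}_{t\in\mathbb R}\psi_i(t)\neq\emptyset$ for all $i=1,\ldots,p$, then $$\operatorname*{argmin}_{\mathbf x\in\mathbb R^d}\ \frac12\|\mathbf H\mathbf x-\mathbf y\|_2^2+\sum_{i=1}^p\psi_i(\mathbf w_i^T\mathbf x)\neq\emptyset .$$ *)

(* Defs.v *)
From mathcomp Require Import all_boot all_order all_algebra.
From mathcomp Require Import reals.
Set Implicit Arguments. Unset Strict Implicit. Unset Printing Implicit Defensive.
Import Order.TTheory GRing.Theory Num.Theory.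
Local Open Scope ring_scope.

Definition convex_fun (R : realType) (f : R -> R) : Prop :=
  forall (x y t : R), 0 <= t -> t <= 1 ->
    f (t * x + (1 - t) * y) <= t * f x + (1 - t) * f y.

Definition argmin_nonempty (T : Type) (R : realType) (f : T -> R) : Prop :=
  exists x : T, forall z : T, f x <= f z.

Definition sqnorm2 (R : realType) (m : nat) (v : 'cV[R]_m) : R :=
  \sum_(i < m) (v i 0) ^+ 2.

Definition dotc (R : realType) (d : nat) (w x : 'cV[R]_d) : R :=
  \sum_(j < d) w j 0 * x j 0.

Definition objective (R : realType) (m d p : nat) (H : 'M[R]_(m, d))
  (y : 'cV[R]_m) (w : 'I_p -> 'cV[R]_d) (psi : 'I_p -> R -> R)
  (x : 'cV[R]_d) : R :=
  2^-1 * sqnorm2 (H *m x - y) + \sum_(i < p) psi i (dotc (w i) x).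

(* Main.v *)
Require Import Defs.
From mathcomp Require Import all_boot all_order all_algebra.
From mathcomp Require Import reals.
From mathcomp Require Import ring lra.
From mathcomp Require Import classical_sets boolp topology normedtype derive.
Import Order.TTheory GRing.Theory Num.Theory.
Import numFieldNormedType.Exports.
Local Open Scope ring_scope.

Module PartA.
Local Open Scope classical_set_scope.

Section Convex1.
Variable R : realType.
Implicit Types f : R -> R.
Lemma cvx_up f x u h : convex_fun f -> 0 <= h -> h <= 1 ->
  f (x + h * u) - f x <= h * (f (x + u) - f x).
Proof.
move=> cf h0 h1; have := cf (x + u) x h h0 h1.
have -> : h * (x + u) + (1 - h) * x = x + h * u by ring.
move=> H; lra.
Qed.

Lemma cvx_down f x u h : convex_fun f -> 0 <= h -> h <= 1 ->
  f x - f (x + h * u) <= h * (f (x - u) - f x).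
Proof.
move=> cf h0 h1.
have h1p : 0 < 1 + h by lra.
have l0 : 0 <= (1 + h)^-1 by rewrite invr_ge0 ltW.
have l1 : (1 + h)^-1 <= 1 by rewrite invf_le1 //; lra.
have := cf (x + h * u) (x - u) _ l0 l1.
have -> : (1 + h)^-1 * (x + h * u) + (1 - (1 + h)^-1) * (x - u) = x.
  by field; lra.
move=> H.
have H2 : (1 + h) * f x <= f (x + h * u) + h * f (x - u).
  have := ler_wpM2l (ltW h1p) H.
  have -> : (1 + h) * ((1 + h)^-1 * f (x + h * u) + (1 - (1 + h)^-1) * f (x - u))
     = f (x + h * u) + h * f (x - u) by field; lra.
  done.
lra.
Qed.
Lemma cvx_lip f x t : convex_fun f -> `|t - x| <= 1 ->
  `|f t - f x| <= `|t - x| * (`|f (x + 1) - f x| + `|f (x - 1) - f x|).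
Proof.
move=> cf htx.
set M := `|f (x + 1) - f x| + `|f (x - 1) - f x|.
have a1 := ler_norm (f (x + 1) - f x).
have a2 := ler_norm (f (x - 1) - f x).
have b1 := ler_norm (- (f (x + 1) - f x)).
have b2 := ler_norm (- (f (x - 1) - f x)).
rewrite !normrN in b1 b2.
have n1 := normr_ge0 (f (x + 1) - f x); have n2 := normr_ge0 (f (x - 1) - f x).
have [tx|tx] := lerP x t.
  have h0 : 0 <= t - x by lra.
  have h1 : t - x <= 1 by move: htx; rewrite ger0_norm.
  have U := @cvx_up f x 1 _ cf h0 h1; have D := @cvx_down f x 1 _ cf h0 h1.
  rewrite mulr1 in U D; have E : x + (t - x) = t by ring. rewrite E in U D.
  rewrite ler_norml; apply/andP; split.
    have : (t - x) * (f (x - 1) - f x) <= (t - x) * M by apply: ler_wpM2l => //; rewrite /M; lra.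
    lra.
  have : (t - x) * (f (x + 1) - f x) <= (t - x) * M by apply: ler_wpM2l => //; rewrite /M; lra.
  lra.
have h0 : 0 <= x - t by lra.
have h1 : x - t <= 1 by move: htx; rewrite ltr0_norm ?opprB //; lra.
have U := @cvx_up f x (-1) _ cf h0 h1; have D := @cvx_down f x (-1) _ cf h0 h1.
rewrite mulrN1 in U D; have E : x + - (x - t) = t by ring. rewrite E in U D.
rewrite opprK in D.
rewrite ler_norml; apply/andP; split.
  have : (x - t) * (f (x + 1) - f x) <= (x - t) * M by apply: ler_wpM2l => //; rewrite /M; lra.
  lra.
have : (x - t) * (f (x + -1) - f x) <= (x - t) * M by apply: ler_wpM2l => //; rewrite /M; lra.
lra.
Qed.

Lemma cvx_cont f : convex_fun f -> continuous f.
Proof.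
move=> cf x; set M := `|f (x + 1) - f x| + `|f (x - 1) - f x|.
have M0 : 0 <= M by rewrite addr_ge0.
apply/cvgrPdist_le => e e0.
have M1 : 0 < M + 1 by lra.
have d0 : 0 < Num.min 1 (e / (M + 1)).
  by rewrite lt_min ltr01 /= divr_gt0.
apply/nbhs_normP; exists (Num.min 1 (e / (M + 1))) => // t /= Ht.
move: Ht; rewrite lt_min => /andP[H1 H2].
rewrite distrC.
have L := @cvx_lip f x t cf.
rewrite distrC in H1 H2.
apply: le_trans (L (ltW H1)) _.
have H3 : `|t - x| * M <= e / (M + 1) * M by apply: ler_wpM2r => //; exact: ltW.
apply: le_trans H3 _.
rewrite mulrAC ler_pdivrMr // ler_wpM2l ?ltW //.
lra.
Qed.
End Convex1.

End PartA.
Import PartA.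

Set Implicit Arguments. Unset Strict Implicit.

Module PartB.
Local Open Scope classical_set_scope.

Section Slope.
Variable R : realType.
Implicit Types f : R -> R.

Definition flatR f (t : R) := forall s, t <= s -> f s <= f t.
Definition flatL f (t : R) := forall s, s <= t -> f s <= f t.

Lemma cvx_chord f t b s : convex_fun f -> t < b -> b <= s ->
  (s - t) * (f b - f t) <= (b - t) * (f s - f t).
Proof.
move=> cf tb bs.
have st : 0 < s - t by lra.
set l := (b - t) / (s - t).
have l0 : 0 <= l by rewrite divr_ge0 //; lra.
have l1 : l <= 1 by rewrite ler_pdivrMr // mul1r; lra.
have := cf s t l l0 l1.
have -> : l * s + (1 - l) * t = b by rewrite /l; field; lra.
move=> H.
have H2 := ler_wpM2l (ltW st) H.
have E2 : (s - t) * (l * f s + (1 - l) * f t) = (b - t) * f s + (s - b) * f t.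
  by rewrite /l; field; lra.
rewrite E2 in H2.
lra.
Qed.

Lemma slopeR f t : convex_fun f -> (forall s, f t <= f s) ->
  exists q : R * R, 0 <= q.1 /\ (flatR f t \/ 0 < q.1) /\
    forall s, f t + q.1 * Num.max 0 s - q.2 <= f s.
Proof.
move=> cf hm.
have [fl|nfl] := pselect (flatR f t).
  exists (0, 0) => /=; split => // ; split; first by left.
  by move=> s; rewrite mul0r addr0 subr0.
have [b /not_implyP [tb fb]] : exists b, ~ (t <= b -> f b <= f t).
  by apply/existsNP => H; apply: nfl => s; apply: H.
have fb' : f t < f b by rewrite ltNge; apply/negP.
have tb' : t < b.
  rewrite lt_neqAle tb andbT; apply/eqP => E; move: fb'; rewrite E; lra.
set dl := (f b - f t) / (b - t).
have dl0 : 0 < dl by rewrite divr_gt0 //; lra.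
exists (dl, dl * (`|t| + `|b|)) => /=; split; first exact: ltW.
split; first by right.
move=> s.
have nt := ler_norm t; have nb := ler_norm b;
have nt2 : - t <= `|t| by rewrite -normrN ler_norm.
have nb2 : - b <= `|b| by rewrite -normrN ler_norm.
have [bs|sb] := lerP b s.
  have C := cvx_chord cf tb' bs.
  have E : dl * (s - t) <= f s - f t.
    rewrite /dl mulrAC ler_pdivrMr; last lra.
    by rewrite mulrC [X in _ <= X]mulrC.
  have [s0|s0] := lerP 0 s.
    have : dl * s - dl * (`|t| + `|b|) <= dl * (s - t).
      rewrite -mulrBr ler_wpM2l ?ltW //; lra.
    lra.
  have : 0 <= dl * (`|t| + `|b|) := (mulr_ge0 (ltW dl0) (addr_ge0 (normr_ge0 _) (normr_ge0 _))).
  have : 0 <= dl * (s - t) by rewrite mulr_ge0 ?ltW //; lra.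
  lra.
have := hm s.
have : dl * Num.max 0 s <= dl * (`|t| + `|b|).
  rewrite ler_wpM2l ?ltW //.
  have [s0|s0] := lerP 0 s.
    lra.
  lra.
lra.
Qed.

Lemma cvx_neg f : convex_fun f -> convex_fun (fun s => f (- s)).
Proof.
move=> cf x y l l0 l1 /=.
have -> : - (l * x + (1 - l) * y) = l * (- x) + (1 - l) * (- y) by ring.
exact: cf.
Qed.

Lemma slope2 f t : convex_fun f -> (forall s, f t <= f s) ->
  exists q : R * R * R, 0 <= q.1.1 /\ 0 <= q.1.2 /\
    (flatR f t \/ 0 < q.1.1) /\ (flatL f t \/ 0 < q.1.2) /\
    forall s, f t + q.1.1 * Num.max 0 s + q.1.2 * Num.max 0 (- s) - q.2 <= f s.
Proof.
move=> cf hm.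
have [[a K1] /= [a0 [fa Ha]]] := slopeR cf hm.
have hm' : forall s, f (- - t) <= f (- s) by move=> s; rewrite opprK.
have [[b K2] /= [b0 [fb Hb]]] := slopeR (cvx_neg cf) hm'.
exists (a, b, K1 + K2) => /=; split => //; split => //; split => //.
split.
  case: fb => [fl|]; last by right.
  left => s st; have := fl (- s); rewrite !opprK; apply; by rewrite lerN2.
move=> s; have H1 := Ha s; have H2 := Hb (- s); rewrite !opprK in H2.
have K10 : 0 <= K1.
  have := Ha t; have : 0 <= a * Num.max 0 t by rewrite mulr_ge0 // le_max lexx.
  lra.
have K20 : 0 <= K2.
  have := Hb (- t); rewrite opprK.
  have : 0 <= b * Num.max 0 (- t) by rewrite mulr_ge0 // le_max lexx.
  lra.
have [s0|s0] := leP 0 s.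
  have -> : Num.max 0 (- s) = 0 by apply/max_l; rewrite oppr_le0.
  rewrite (max_r s0) in H1.
  lra.
lra.
Qed.
End Slope.

End PartB.
Import PartB.

Module PartC.
Local Open Scope classical_set_scope.

Section Multi.
Variable R : realType.

Lemma cont_sum (T : topologicalType) (I : Type) (r : seq I) (P : pred I)
  (g : I -> T -> R) : (forall i, continuous (g i)) ->
  continuous (fun x => \sum_(i <- r | P i) g i x).
Proof.
move=> hg; elim: r => [|a r IH].
  have -> : (fun x => \sum_(i <- [::] | P i) g i x) = (fun=> 0).
    by apply/funext => x; rewrite big_nil.
  exact: cst_continuous.
have -> : (fun x => \sum_(i <- a :: r | P i) g i x) =
  (fun x => if P a then g a x + \sum_(i <- r | P i) g i x else \sum_(i <- r | P i) g i x).
  by apply/funext => x; rewrite big_cons.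
case: (P a) => //.
move=> x; apply: cvgD; [exact: hg | exact: IH].
Qed.

Variables d n : nat.

Lemma cont_coordM (M : 'M[R]_(d, n)) j :
  continuous (fun x : 'rV[R]_d => (x *m M) ord0 j).
Proof.
have -> : (fun x : 'rV[R]_d => (x *m M) ord0 j) = (fun x => \sum_k x ord0 k * M k j).
  by apply/funext => x; rewrite mxE.
apply: cont_sum => k x.
apply: (@continuousM _ _ (fun x : 'rV[R]_d => x ord0 k) (fun=> M k j)); [exact: coord_continuous | exact: cst_continuous].
Qed.

Definition Fv (M : 'M[R]_(d, n)) (phi : 'I_n -> R -> R) (x : 'rV[R]_d) : R :=
  \sum_j phi j ((x *m M) ord0 j).

Lemma cont_Fv M phi : (forall j, continuous (phi j)) -> continuous (Fv M phi).
Proof.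
move=> hc; apply: cont_sum => j x.
apply: continuous_comp; [exact: cont_coordM | exact: hc].
Qed.

Definition box (B : R) := [set v : 'rV[R]_d | forall i, `[-B, B] (v ord0 i)].

Lemma box_compact B : compact (box B).
Proof. by apply: (@rV_compact _ _ (fun=> `[-B, B])) => _; exact: segment_compact. Qed.

Lemma inbox B v : box B v <-> forall i, `|v ord0 i| <= B.
Proof.
split=> H i; have := H i; rewrite /= in_itv /= ?ler_norml //.
Qed.

Lemma le_sum1 (I : finType) (F : I -> R) i : (forall j, 0 <= F j) -> F i <= \sum_j F j.
Proof.
move=> h; rewrite (bigD1 i) //= -[X in X <= _]addr0 lerD //.
by apply: sumr_ge0 => j _.
Qed.

Definition N1 (z : 'rV[R]_n) := \sum_j `|z ord0 j|.

Lemma pinv_bound (P : 'M[R]_(n, d)) (u : 'rV[R]_n) i :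
  `|(u *m P) ord0 i| <= (\sum_k \sum_l `|P k l|) * N1 u.
Proof.
rewrite mxE; apply: le_trans (ler_norm_sum _ _ _) _.
rewrite /N1 mulr_sumr; apply: ler_sum => k _.
rewrite normrM mulrC ler_wpM2r //.
apply: (le_trans (y := \sum_l `|P k l|)).
  exact: (le_sum1 (F := fun l => `|P k l|) i (fun _ => normr_ge0 _)).
exact: (le_sum1 (F := fun k => \sum_l `|P k l|) k (fun j => sumr_ge0 _ (fun l _ => normr_ge0 _))).
Qed.

End Multi.

End PartC.
Import PartC.

Module PartD.


Section Step.
Variable R : realType.
Variables d n : nat.

Definition hyps (M : 'M[R]_(d, n)) (phi : 'I_n -> R -> R) (t : 'I_n -> R) :=
  [/\ forall j, convex_fun (phi j), forall j s, phi j (t j) <= phi j s &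
      forall j, (forall s, phi j s <= phi j (t j)) -> col j M = 0].

Definition cnt (M : 'M[R]_(d, n)) := #|[set j | col j M != 0]|.

Definition has_min (M : 'M[R]_(d, n)) (phi : 'I_n -> R -> R) :=
  exists x, forall z, Fv M phi x <= Fv M phi z.

Definition C1cond (M : 'M[R]_(d, n)) (phi : 'I_n -> R -> R) (t : 'I_n -> R) (v : 'rV[R]_d) :=
  [/\ forall j, 0 < (v *m M) ord0 j -> flatR (phi j) (t j),
      forall j, (v *m M) ord0 j < 0 -> flatL (phi j) (t j) &
      exists j, (v *m M) ord0 j != 0].

Lemma case1 M phi t : hyps M phi t ->
  (forall M' phi' t', hyps M' phi' t' -> (cnt M' < cnt M)%N -> has_min M' phi') ->
  (exists v, C1cond M phi t v) -> has_min M phi.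
Proof.
move=> [hc hm hz] IH [v [hR hL [j0 hj0]]].
pose c j := (v *m M) ord0 j.
pose M' := \matrix_(i, j) (if c j == 0 then M i j else 0 : R).
pose phi' j := if c j == 0 then phi j else fun _ : R => phi j (t j).
have cM' y j : (y *m M') ord0 j = if c j == 0 then (y *m M) ord0 j else 0.
  rewrite mxE; case E : (c j == 0).
    by rewrite mxE; apply: eq_bigr => k _; rewrite mxE E.
  by apply: big1 => k _; rewrite mxE E mulr0.
have hyps' : hyps M' phi' t.
  split.
  - move=> j; rewrite /phi'; case: ifP => _; first exact: hc.
    move=> a b l _ _ /=.
    by have -> : l * phi j (t j) + (1 - l) * phi j (t j) = phi j (t j) by ring.
  - by move=> j s; rewrite /phi'; case: ifP => _ //; exact: hm.
  - move=> j; rewrite /phi'; case: ifP => E H.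
      apply/colP => i; rewrite !mxE E.
      by have := hz j H => /colP/(_ i); rewrite !mxE.
    by apply/colP => i; rewrite !mxE E.
have hcnt : (cnt M' < cnt M)%N.
  have j0in : j0 \in [set j | col j M != 0].
    rewrite inE; apply: contra hj0 => /eqP H.
    rewrite mxE; apply/eqP; apply: big1 => k _.
    by move/colP: H => /(_ k); rewrite !mxE => ->; rewrite mulr0.
  rewrite /cnt [X in (_ < X)%N](cardsD1 j0) j0in add1n ltnS.
  apply: subset_leq_card; apply/fintype.subsetP => j; rewrite !inE => H.
  apply/andP; split.
    apply: contraNneq H => ->; apply/eqP/colP => i; rewrite !mxE.
    by have -> : (c j0 == 0) = false by apply/negbTE.
  apply: contraNneq H => H'; apply/eqP/colP => i; rewrite !mxE.
  case: ifP => // _.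
  by move/colP: H' => /(_ i); rewrite !mxE.
have [x0 hx0] := IH M' phi' t hyps' hcnt.
pose lam := \sum_j `|t j - (x0 *m M) ord0 j| / `|c j|.
exists (x0 + lam *: v).
have key : Fv M phi (x0 + lam *: v) = Fv M' phi' x0.
  apply: eq_bigr => j _; rewrite cM' /phi'.
  have -> : ((x0 + lam *: v) *m M) ord0 j = (x0 *m M) ord0 j + lam * c j.
    by rewrite mulmxDl -scalemxAl mxE [X in _ + X]mxE.
  case: ifP => /eqP E; first by rewrite E mulr0 addr0.
  apply/le_anti; rewrite hm andbT.
  have lj : `|t j - (x0 *m M) ord0 j| / `|c j| <= lam.
    exact: (le_sum1 (F := fun j => `|t j - (x0 *m M) ord0 j| / `|c j|) j
      (fun _ => divr_ge0 (normr_ge0 _) (normr_ge0 _))).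
  have cpos : 0 < `|c j| by rewrite normr_gt0; apply/eqP.
  rewrite ler_pdivrMr // in lj.
  have n1 := ler_norm (t j - (x0 *m M) ord0 j).
  have n2 : - (t j - (x0 *m M) ord0 j) <= `|t j - (x0 *m M) ord0 j|.
    by rewrite -normrN ler_norm.
  have [cn|cp] := ltP (c j) 0.
    rewrite (ltr0_norm cn) mulrN in lj.
    apply: hL => //; lra.
  have cp' : 0 < c j by rewrite lt_neqAle cp andbT eq_sym; apply/eqP.
  rewrite (gtr0_norm cp') in lj.
  apply: hR => //; lra.
rewrite key => z; apply: le_trans (hx0 z) _.
apply: ler_sum => j _; rewrite cM' /phi'; case: ifP => // _.
Qed.

End Step.

End PartD.
Import PartD.

Module PartE.

Lemma cont_max0 (R : realType) : continuous (fun s : R => Num.max 0 s).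
Proof.
move=> x.
exact: (@continuous_max _ R (fun=> 0) (fun s : R => s) x (@cst_continuous _ _ 0 x)
  (fun A (h : nbhs x A) => h)).
Qed.

Lemma cont_term (R : realType) (T : topologicalType) (a b : R) (g : T -> R) : continuous g ->
  continuous (fun y => a * Num.max 0 (g y) + b * Num.max 0 (- g y)).
Proof.
move=> hg x.
apply: (@continuousD _ _ _ (fun y => a * Num.max 0 (g y)) (fun y => b * Num.max 0 (- g y))).
  apply: (@continuousM _ _ (fun=> a) (fun y => Num.max 0 (g y))); first exact: cst_continuous.
  apply: (@continuous_comp _ _ _ g (fun s => Num.max 0 s)); [exact: hg | exact: cont_max0].
apply: (@continuousM _ _ (fun=> b) (fun y => Num.max 0 (- g y))); first exact: cst_continuous.
apply: (@continuous_comp _ _ _ (fun y => - g y) (fun s => Num.max 0 s)); last exact: cont_max0.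
exact: (@continuousN _ _ _ g x (hg x)).
Qed.

Section Case2.
Variable R : realType.
Variables d n : nat.

Lemma N1_ge0 (z : 'rV[R]_n) : 0 <= N1 z.
Proof. by apply: sumr_ge0 => j _. Qed.

Lemma N1Z (a : R) (z : 'rV[R]_n) : N1 (a *: z) = `|a| * N1 z.
Proof. by rewrite /N1 mulr_sumr; apply: eq_bigr => j _; rewrite mxE normrM. Qed.

Lemma N1_eq0 (z : 'rV[R]_n) : N1 z = 0 -> z = 0.
Proof.
move=> h; apply/rowP => j; rewrite mxE.
have := @psumr_eq0P _ _ _ _ (fun j _ => normr_ge0 (z ord0 j)) h j isT.
by move/eqP; rewrite normr_eq0 => /eqP; rewrite (ord1 _).
Qed.

Lemma N1_0 : N1 (0 : 'rV[R]_n) = 0.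
Proof. by rewrite /N1 big1 // => j _; rewrite mxE normr0. Qed.

Lemma cont_N1M (M : 'M[R]_(d, n)) : continuous (fun y : 'rV[R]_d => N1 (y *m M)).
Proof.
apply: cont_sum => j x.
apply: continuous_comp; [exact: cont_coordM | exact: norm_continuous].
Qed.

Lemma case2 (M : 'M[R]_(d, n)) (phi : 'I_n -> R -> R) (t : 'I_n -> R) : hyps M phi t -> ~ (exists v, C1cond M phi t v) -> has_min M phi.
Proof.
move=> [hc hm hz] nC1.
have hcont j : continuous (phi j) := @cvx_cont _ _ (hc j).
have [q hq] := choice (fun j => slope2 (hc j) (hm j)).
pose dp j := (q j).1.1. pose dm j := (q j).1.2. pose K j := (q j).2.
have dp0 j : 0 <= dp j by have [? _] := hq j.
have dm0 j : 0 <= dm j by have [_ [? _]] := hq j.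
pose r (z : 'rV[R]_n) :=
  \sum_j (dp j * Num.max 0 (z ord0 j) + dm j * Num.max 0 (- z ord0 j)).
pose m0 := \sum_j phi j (t j). pose Ks := \sum_j K j.
have term_ge0 (z : 'rV[R]_n) j :
    0 <= dp j * Num.max 0 (z ord0 j) + dm j * Num.max 0 (- z ord0 j).
  by rewrite addr_ge0 // mulr_ge0 // le_max lexx.
have r_ge0 z : 0 <= r z by apply: sumr_ge0 => j _.
have lowF x : m0 + r (x *m M) - Ks <= Fv M phi x.
  rewrite /m0 /r /Ks -big_split -sumrB; apply: ler_sum => j _.
  have [_ [_ [_ [_ H]]]] := hq j.
  have := H ((x *m M) ord0 j); rewrite /dp /dm /K /=; lra.
have rpos x : x *m M != 0 -> 0 < r (x *m M).
  move=> nz; rewrite lt_neqAle r_ge0 andbT; apply/negP => /eqP r0.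
  have terms j : dp j * Num.max 0 ((x *m M) ord0 j) + dm j * Num.max 0 (- (x *m M) ord0 j) = 0.
    exact: (@psumr_eq0P _ _ _ _ (fun j _ => term_ge0 (x *m M) j) (esym r0) j isT).
  apply: nC1; exists x; split.
  - move=> j pj; have [_ [_ [fl _]]] := hq j; case: fl => // dpp; exfalso.
    have := terms j.
    rewrite (max_r (ltW pj)) (@max_l _ _ 0 (- _)); last by rewrite oppr_le0 ltW.
    rewrite mulr0 addr0 => /eqP; rewrite mulf_eq0 => /orP[/eqP|/eqP] E.
      by move: dpp; rewrite -/(dp j) E ltxx.
    by move: pj; rewrite E ltxx.
  - move=> j pj; have [_ [_ [_ [fl _]]]] := hq j; case: fl => // dmp; exfalso.
    have := terms j.
    rewrite (@max_l _ _ 0 ((x *m M) ord0 j)) ?(ltW pj) //.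
    rewrite (@max_r _ _ 0 (- _)); last by rewrite oppr_ge0 ltW.
    rewrite mulr0 add0r => /eqP; rewrite mulf_eq0 => /orP[/eqP|/eqP] E.
      by move: dmp; rewrite -/(dm j) E ltxx.
    by move: pj; rewrite -oppr_gt0 E ltxx.
  - case: (pselect (exists j, (x *m M) ord0 j != 0)) => // H; exfalso.
    move/eqP: nz; apply; apply/rowP => j; rewrite [RHS]mxE.
    case: (eqVneq ((x *m M) ord0 j) 0) => [|Hj]; first by rewrite (ord1 _).
    by exfalso; apply: H; exists j.
have homog a z : 0 <= a -> r (a *: z) = a * r z.
  move=> a0; rewrite /r mulr_sumr; apply: eq_bigr => j _; rewrite !mxE.
  have [zp|zn] := boolP (0 <= z ord0 j).
    rewrite (max_r (mulr_ge0 a0 zp)) (max_r zp).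
    rewrite (@max_l _ _ 0 (- (a * _))); last by rewrite oppr_le0 mulr_ge0.
    rewrite (@max_l _ _ 0 (- _)); last by rewrite oppr_le0.
    ring.
  rewrite -ltNge in zn.
  rewrite (@max_l _ _ 0 (a * _)); last by rewrite mulr_ge0_le0 // ltW.
  rewrite (@max_l _ _ 0 (z ord0 j)); last exact: ltW.
  rewrite (@max_r _ _ 0 (- (a * _))); last by rewrite oppr_ge0 mulr_ge0_le0 // ltW.
  rewrite (@max_r _ _ 0 (- _)); last by rewrite oppr_ge0 ltW.
  ring.
pose P := pinvmx M.
pose CP := \sum_k \sum_l `|P k l|.
have CP0 : 0 <= CP by apply: sumr_ge0 => k _; apply: sumr_ge0 => l _.
have pinvK x : x *m M *m P *m M = x *m M := mulmxKpV (submxMl x M).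
pose S := (box CP `&` [set y : 'rV[R]_d | N1 (y *m M) = 1])%classic.
have nz_proj x : x *m M != 0 ->
    S (((N1 (x *m M))^-1 *: (x *m M)) *m P) /\
    ((N1 (x *m M))^-1 *: (x *m M)) *m P *m M = (N1 (x *m M))^-1 *: (x *m M).
  move=> nz; set a := N1 (x *m M).
  have a0 : 0 < a.
    rewrite lt_neqAle N1_ge0 andbT eq_sym; apply/negP => /eqP h.
    by move/eqP: nz; apply; apply: N1_eq0.
  have E : (a^-1 *: (x *m M)) *m P *m M = a^-1 *: (x *m M).
    by rewrite scalemxAl pinvK.
  have ai0 : 0 <= a^-1 by rewrite invr_ge0 ltW.
  have aV : a^-1 * a = 1 by rewrite mulVf // gt_eqF.
  split => //; split.
    apply/inbox => i; apply: le_trans (pinv_bound _ _ i) _.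
    by rewrite N1Z (ger0_norm ai0) aV mulr1.
  by rewrite /= E N1Z (ger0_norm ai0) aV.
have contr : continuous (fun y : 'rV[R]_d => r (y *m M)).
  apply: cont_sum => j; apply: cont_term; exact: cont_coordM.
have [c [c0 hcoer]] : exists c, 0 < c /\ forall x, c * N1 (x *m M) <= r (x *m M).
  case: (pselect (S !=set0)%classic) => [Sne|Se].
    have Sc : compact S.
      apply: compact_closedI; first exact: box_compact.
      have H := (continuous_closedP _).1 (@cont_N1M M) _ (@closed_eq _ (1 : R)). exact: H.
    have [x1 Sx1 hx1] := compact_EVT_min Sne Sc (continuous_subspaceT contr).
    have Sx1' : S x1 by rewrite inE in Sx1.
    have nz1 : x1 *m M != 0.
      apply/negP => /eqP h; have := Sx1'.2; rewrite /= h N1_0 => /eqP.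
      by rewrite eq_sym oner_eq0.
    exists (r (x1 *m M)); split; first exact: rpos.
    move=> x; case: (eqVneq (x *m M) 0) => [->|nz].
      by rewrite N1_0 mulr0.
    have [Sx' Ex'] := nz_proj x nz.
    have := hx1 _ (mem_set Sx'); rewrite Ex' homog ?invr_ge0 ?N1_ge0 // => H.
    have a0 : 0 < N1 (x *m M).
      rewrite lt_neqAle N1_ge0 andbT eq_sym; apply/negP => /eqP h.
      by move/eqP: nz; apply; apply: N1_eq0.
    have := ler_wpM2l (ltW a0) H; rewrite mulrA mulfV ?gt_eqF // mul1r.
    by rewrite mulrC.
  exists 1; split => // x; case: (eqVneq (x *m M) 0) => [->|nz].
    by rewrite N1_0 mulr0.
  by exfalso; apply: Se; have [Sx' _] := nz_proj x nz; eexists; exact: Sx'.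
pose F0 := Fv M phi 0.
pose Bn := (F0 - m0 + Ks) / c.
have Bn0 : 0 <= Bn.
  apply: divr_ge0; last exact: ltW.
  have := lowF 0; rewrite mul0mx -/F0; have := r_ge0 0; lra.
pose B := CP * Bn.
have B0 : 0 <= B by rewrite mulr_ge0.
pose T := @box R d B.
have T0 : T 0 by apply/inbox => i; rewrite mxE normr0.
have Tne : (T !=set0)%classic by exists 0.
have [xs Txs hxs] := compact_EVT_min Tne (@box_compact R d B)
  (continuous_subspaceT (@cont_Fv R d n M phi hcont)).
exists xs => z.
case: (lerP F0 (Fv M phi z)) => h.
  apply: le_trans h; exact: hxs (mem_set T0).
pose z' := z *m M *m P.
have Fz : Fv M phi z' = Fv M phi z by rewrite /Fv /z' pinvK.
rewrite -Fz; apply: hxs; apply: mem_set; apply/inbox => i.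
apply: le_trans (pinv_bound _ _ i) _.
rewrite ler_wpM2l //.
rewrite ler_pdivlMr //.
have := hcoer z; have := lowF z; rewrite -/F0 in h.
rewrite mulrC; lra.
Qed.


End Case2.

End PartE.
Import PartE.


Lemma core (R : realType) (d n k : nat) : forall (M : 'M[R]_(d, n)) phi t,
  hyps M phi t -> (cnt M <= k)%N -> has_min M phi.
Proof.
elim: k => [|k IH] M phi t h hk;
  case: (pselect (exists v, C1cond M phi t v)) => [C1|C2]; try exact: case2 h C2.
  apply: case1 h _ C1 => M' phi' t' h' hlt; exfalso.
  by move: (leq_trans hlt hk).
apply: case1 h _ C1 => M' phi' t' h' hlt; apply: IH h' _.
by rewrite -ltnS; apply: leq_trans hlt hk.
Qed.

Lemma split_l m p (i : 'I_m) : split (lshift p i) = inl i.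
Proof. exact: (unsplitK (inl _ i)). Qed.
Lemma split_r m p (i : 'I_p) : split (rshift m i) = inr i.
Proof. exact: (unsplitK (inr _ i)). Qed.

Lemma quad_convex (R : realType) (c : R) : convex_fun (fun s => 2^-1 * (s - c) ^+ 2).
Proof.
move=> a b l l0 l1.
have E : l * (2^-1 * (a - c) ^+ 2) + (1 - l) * (2^-1 * (b - c) ^+ 2)
   - 2^-1 * (l * a + (1 - l) * b - c) ^+ 2 = 2^-1 * (l * (1 - l)) * (a - b) ^+ 2.
  by field.
have : 0 <= 2^-1 * (l * (1 - l)) * (a - b) ^+ 2.
  rewrite mulr_ge0 ?sqr_ge0 // mulr_ge0 ?invr_ge0 ?ler0n // mulr_ge0 //.
  by rewrite subr_ge0.
rewrite -E; lra.
Qed.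

Theorem proposition1 (R : realType) (m d p : nat) (H : 'M[R]_(m, d))
  (y : 'cV[R]_m) (w : 'I_p -> 'cV[R]_d) (psi : 'I_p -> R -> R)
  (hconv : forall i : 'I_p, convex_fun (psi i))
  (hmin : forall i : 'I_p, argmin_nonempty (psi i)) :
  argmin_nonempty (objective H y w psi).
Proof.
have [tm htm] := choice hmin.
pose cst i := `[< forall s, psi i s <= psi i (tm i) >].
pose W := \matrix_(k, i) (if cst i then 0 else w i k 0 : R).
pose M := row_mx H^T W.
pose phi (j : 'I_(m + p)) : R -> R :=
  match split j with inl i => fun s => 2^-1 * (s - y i 0) ^+ 2 | inr i => psi i end.
pose t (j : 'I_(m + p)) : R := match split j with inl i => y i 0 | inr i => tm i end.
have h : hyps M phi t.
  split.
  - move=> j; rewrite /phi; case: (split j) => i //; exact: quad_convex.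
  - move=> j s; rewrite /phi /t; case: (split j) => i //.
    by rewrite subrr expr0n /= mulr0 mulr_ge0 ?invr_ge0 ?ler0n ?sqr_ge0.
  - move=> j; rewrite /phi /t -(splitK j); case: (split j) => i /=.
      rewrite ?split_l => /(_ (y i 0 + 1)); rewrite subrr addrAC subrr add0r.
      rewrite expr0n expr1n /= mulr0 mulr1 => H0; exfalso; lra.
    rewrite ?split_r => hc; apply/colP => k.
    rewrite !mxE /= split_r mxE.
    by have -> : cst i by apply/asboolP.
have [x0 hx0] := core h (leqnn _).
have key (x : 'cV[R]_d) : objective H y w psi x = Fv M phi x^T.
  rewrite /objective /Fv big_split_ord /= /sqnorm2 mulr_sumr.
  congr (_ + _); apply: eq_bigr => i _.
    rewrite /phi split_l mul_mx_row row_mxEl -trmx_mul !mxE.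
    by congr (_ * (_ - _) ^+ 2); rewrite !mxE.
  rewrite /phi split_r mul_mx_row row_mxEr /dotc mxE.
  case: (boolP (cst i)) => ci.
    have hc : forall s, psi i s <= psi i (tm i) by apply/asboolP.
    have E s : psi i s = psi i (tm i) by apply/le_anti; rewrite hc htm.
    by rewrite !E.
  congr (psi i _); apply: eq_bigr => k _; rewrite !mxE (negbTE ci) mulrC.
  done.
exists x0^T => z; rewrite !key trmxK; exact: hx0.
Qed.
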